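(* Let $(K,S^0)$ be a divided simplicial complex with associated layered complex $(K,C,S)$, and let $s,p$ be simplices of $K$ such that (i) $p$ is an intermediate simplex of $(K,C,S)$, (ii) $p$ is principal in $K$, (iii) $s$ is a face of $p$ which is free in $K$, and (iv) every simplex $t$ of $S$ which is a proper face of $p$ is a proper face of $s$. Let $K_1=K-\{s,p\}$. Then $K_1$ has the same vertex set as $K$, so that $(K_1,S^0)$ is a divided simplicial complex, and the layered complex $(K_1,C,S)$ is the layered complex associated to the divided complex $(K_1,S^0)$.
   Context: A simplicial complex $K$ is a set of finite nonempty sets (simplices) closed under passing to nonempty subsets (faces); $K^0$ is its vertex set. A simplex is principal in $K$ if it is not a proper face of any simplex of $K$; $s$ is free in $K$ if it is a proper face of a principal simplex $p$ and of no other simplex of $K$. A layered simplicial complex is a triple $(K,C,S)$ with $C,S$ disjoint subcomplexes of $K$; its intermediate simplices are the simplices lying in neither $C$ nor $S$. A divided simplicial complex is a pair $(K,S^0)$ with $S^0\subseteq K^0$; its associated layered complex $(K,C,S)$ has $S$ = simplices all of whose vertices lie in $S^0$ and $C$ = simplices all of whose vertices lie in $K^0-S^0$. *)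

(* Defs.v *)
From mathcomp Require Import all_boot finmap.
Set Implicit Arguments. Unset Strict Implicit. Unset Printing Implicit Defensive.
Local Open Scope fset_scope.

(* Vertices live in an arbitrary choiceType T; simplices are finite sets
   {fset T}; a collection of simplices is a predicate on {fset T}.
   Equality of collections is stated extensionally (pointwise iff). *)
Section Defs.
Variable T : choiceType.
Definition cplx := {fset T} -> Prop.

Definition is_complex (K : cplx) : Prop :=
  (forall s, K s -> s != fset0) /\
  (forall s t, K s -> t != fset0 -> fsubset t s -> K t).

Definition vertices (K : cplx) : T -> Prop := fun v => exists s, K s /\ v \in s.

Definition subcomplex (L K : cplx) : Prop := is_complex L /\ forall t, L t -> K t.

Definition principal (K : cplx) (p : {fset T}) : Prop :=
  K p /\ forall q, K q -> ~ fproper p q.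

Definition free (K : cplx) (s : {fset T}) : Prop :=
  K s /\ exists p, principal K p /\ fproper s p /\
         forall q, K q -> fproper s q -> q = p.

Definition layered (K C S : cplx) : Prop :=
  subcomplex C K /\ subcomplex S K /\ forall t, ~ (C t /\ S t).

Definition intermediate (K C S : cplx) (t : {fset T}) : Prop :=
  K t /\ ~ C t /\ ~ S t.

Definition divided (K : cplx) (S0 : T -> Prop) : Prop :=
  is_complex K /\ forall v, S0 v -> vertices K v.

Definition assocS (K : cplx) (S0 : T -> Prop) : cplx :=
  fun t => K t /\ forall v, v \in t -> S0 v.
Definition assocC (K : cplx) (S0 : T -> Prop) : cplx :=
  fun t => K t /\ forall v, v \in t -> ~ S0 v.

Definition remove2 (K : cplx) (s p : {fset T}) : cplx :=
  fun t => K t /\ t <> s /\ t <> p.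
End Defs.

(* Main.v *)
Require Import Defs.
From mathcomp Require Import all_boot finmap.
From Stdlib Require Import Classical.
Local Open Scope fset_scope.

Lemma fset1_ne0 (T : choiceType) (u : T) : [fset u] != fset0.
Proof. apply/eqP => h. have : u \in [fset u] by rewrite inE. by rewrite h inE. Qed.

Lemma fproper_irr (T : choiceType) (A : {fset T}) : ~ fproper A A.
Proof. by rewrite fproperEneq eqxx. Qed.

Theorem lemma4p9 (T : choiceType) (K : cplx T) (S0 : T -> Prop) (s p : {fset T}) :
  divided K S0 ->
  intermediate K (assocC K S0) (assocS K S0) p ->
  principal K p ->
  fsubset s p -> free K s ->
  (forall t, assocS K S0 t -> fproper t p -> fproper t s) ->
  let K1 := remove2 K s p in
  is_complex K1 /\
  (forall v, vertices K1 v <-> vertices K v) /\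
  divided K1 S0 /\
  layered K1 (assocC K S0) (assocS K S0) /\
  (forall t, assocC K1 S0 t <-> assocC K S0 t) /\
  (forall t, assocS K1 S0 t <-> assocS K S0 t).
Proof.
move=> [[Hne Hcl] HS0] [Kp [nCp nSp]] [_ Pp] sp [Ks [p' [[Kp' Pp'] [sp' Hq]]]] Hiv K1.
have spp : fproper s p.
  rewrite fproperEneq sp andbT; apply/eqP => e; subst s.
  exact: (Pp p' Kp' sp').
have ep : p = p' by apply: Hq.
subst p'.
have [u [up Su]] : exists u, u \in p /\ S0 u.
  apply: NNPP => h; apply: nCp; split => // v vp Sv; apply: h; by exists v.
have single : forall v, v \in p -> K [fset v] /\ [fset v] <> p.
  move=> v vp; split; first by apply: (Hcl p) => //; [exact: fset1_ne0 | rewrite fsub1set].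
  move=> e; move: spp; rewrite -e fproperEneq fsubset1.
  case/andP => /negPf -> /= /eqP s0; move: (Hne _ Ks); by rewrite s0 eqxx.
have [Ku up1] : K [fset u] /\ fproper [fset u] p.
  have [K1u ne] := single u up; split => //.
  by rewrite fproperEneq fsub1set up andbT; apply/eqP.
have SU : assocS K S0 [fset u].
  by split=> // v; rewrite inE => /eqP ->.
have us : u \in s.
  by have := Hiv _ SU up1; move/fproper_sub; rewrite fsub1set.
have Hs1 : forall v, v \in p -> [fset v] <> s.
  move=> v vp e; have h := Hiv _ SU up1.
  move: us; rewrite -e inE => /eqP ev; subst v.
  by move: h; rewrite e; apply: fproper_irr.
have nCs : ~ assocC K S0 s by case => _ h; exact: (h u us Su).
have nSs : ~ assocS K S0 s.
  move=> h; have := Hiv s h spp; exact: fproper_irr.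
have K1c : is_complex K1.
  split; first by move=> t [Kt _]; exact: Hne.
  move=> w t [Kw [ws wp]] t0 tw; split; first exact: (Hcl w t Kw t0 tw).
  split=> e; subst t.
  - have swp : fproper s w by rewrite fproperEneq tw andbT; apply/eqP => e; apply: ws.
    exact: wp (Hq w Kw swp).
  - apply: (Pp w Kw); rewrite fproperEneq tw andbT; apply/eqP => e; apply: wp.
    by rewrite e.
have Cin : forall t, assocC K S0 t -> K1 t.
  move=> t [Kt h]; split=> //; split=> e; subst t; [apply: nCs | apply: nCp]; by split.
have Sin : forall t, assocS K S0 t -> K1 t.
  move=> t [Kt h]; split=> //; split=> e; subst t; [apply: nSs | apply: nSp]; by split.
have Vx : forall v, vertices K1 v <-> vertices K v.
  move=> v; split; first by case=> t [[Kt _] vt]; exists t.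
  case=> t [Kt vt].
  have [tsp | ntsp] := classic (t = s \/ t = p).
  - have vp : v \in p by case: tsp => e; subst t => //; exact: (fsubsetP sp).
    have [K1v nep] := single v vp.
    exists [fset v]; split; last by rewrite inE.
    split=> //; split; [exact: Hs1 | exact: nep].
  - exists t; split=> //; split=> //; split=> e; apply: ntsp; tauto.
split=> //; split=> //.
split; first by split=> // v /HS0 /Vx.
split.
  split; [|split].
  - split=> //; split.
    + by move=> t [Kt _]; exact: Hne.
    + move=> w t [Kw h] t0 tw; split; first exact: (Hcl w t Kw t0 tw).
      by move=> v vt; apply: h; exact: (fsubsetP tw).
  - split=> //; split.
    + by move=> t [Kt _]; exact: Hne.
    + move=> w t [Kw h] t0 tw; split; first exact: (Hcl w t Kw t0 tw).
      by move=> v vt; apply: h; exact: (fsubsetP tw).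
  - move=> t [[Kt hC] [_ hS]].
    have := Hne _ Kt; case: (fset_0Vmem t) => [-> | [x xt]]; first by rewrite eqxx.
    by move=> _; exact: (hC x xt (hS x xt)).
split=> t; split.
- by case=> [[Kt _] h].
- by move=> [Kt h]; split=> //; apply: Cin.
- by case=> [[Kt _] h].
- by move=> [Kt h]; split=> //; apply: Sin.
Qed.
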